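(* Let $\mathfrak{g}$ be a filiform Lie algebra of odd dimension $n\ge3$ over a field $K$ of characteristic zero, and fix an adapted basis $\{e_1,\dots,e_n\}$, with $\mathfrak{g}_i=\langle e_i,\dots,e_n\rangle$. Then $\chi(\mathfrak{g})=1$ if and only if $[\mathfrak{g}_i,\mathfrak{g}_{n-i}]\neq0$ for all $i=1,\dots,n-1$.
   Context: A filiform Lie algebra of dimension $n$ is a nilpotent Lie algebra with $\dim\mathfrak{g}^k=n-k$ for $2\le k\le n$ (lower central series $\mathfrak{g}^1=\mathfrak{g}$, $\mathfrak{g}^{k+1}=[\mathfrak{g},\mathfrak{g}^k]$). An adapted basis is a basis $\{e_1,\dots,e_n\}$ with $[e_1,e_i]=e_{i+1}$ ($2\le i\le n-1$), $[e_1,e_n]=0$, $[e_2,e_3]\in\langle e_5,\dots,e_n\rangle$; such a basis exists, and (Vergne) it then satisfies $[e_i,e_j]\in\langle e_{i+j},\dots,e_n\rangle$ if $i+j\le n$, $[e_i,e_j]=0$ if $i+j>n+1$, and $[e_i,e_{n+1-i}]=(-1)^i\alpha e_n$ for some $\alpha\in K$ with $\alpha=0$ when $n$ is odd. For $\ell\in\mathfrak{g}^*$, $\mathfrak{g}(\ell)=\{y\in\mathfrak{g}\mid\ell([x,y])=0\ \forall x\in\mathfrak{g}\}$ and $\chi(\mathfrak{g})=\min_{\ell\in\mathfrak{g}^*}\dim\mathfrak{g}(\ell)$. *)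

(* Defs.v *)
From HB Require Import structures.
From mathcomp Require Import all_boot all_order all_algebra.
Set Implicit Arguments. Unset Strict Implicit. Unset Printing Implicit Defensive.
Import Order.TTheory GRing.Theory Num.Theory.
Local Open Scope ring_scope.

(* A Lie algebra of dimension n over K is modelled as K^n = 'rV[K]_n with its
   standard basis e_0, ..., e_(n-1) (0-indexed: e_k is the paper's e_(k+1)),
   and a bracket given by structure constants c i j = [e_i, e_j],
   extended bilinearly. *)

Section Defs.
Variables (K : fieldType) (n : nat).

Definition bvec (i : 'I_n) : 'rV[K]_n := delta_mx 0 i.

Definition br (c : 'I_n -> 'I_n -> 'rV[K]_n) (x y : 'rV[K]_n) : 'rV[K]_n :=
  \sum_(i < n) \sum_(j < n) (x 0 i * y 0 j) *: c i j.

Definition is_lie (c : 'I_n -> 'I_n -> 'rV[K]_n) : Prop :=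
  (forall x, br c x x = 0) /\
  (forall x y z, br c x (br c y z) + br c y (br c z x) + br c z (br c x y) = 0).

(* [g, V] : the subspace spanned by the brackets [x, v], x in g, v in V
   (by bilinearity it is spanned by brackets of basis vectors). *)
Definition brg (c : 'I_n -> 'I_n -> 'rV[K]_n) (V : {vspace 'rV[K]_n})
  : {vspace 'rV[K]_n} :=
  <<[seq br c (bvec i) v | i <- enum 'I_n, v <- (vbasis V : seq _)]>>%VS.

Fixpoint lcs (c : 'I_n -> 'I_n -> 'rV[K]_n) (k : nat) : {vspace 'rV[K]_n} :=
  match k with
  | 0 | 1 => fullv
  | k'.+1 => brg c (lcs c k')
  end.

Definition nilpotent_lie c : Prop := exists k, lcs c k = 0%VS.

Definition filiform c : Prop :=
  is_lie c /\ nilpotent_lie c /\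
  (forall k, (2 <= k <= n)%N -> \dim (lcs c k) = (n - k)%N).

(* The standard basis is adapted (paper's indices shifted by one):
   [e_1,e_i] = e_(i+1) for 2 <= i <= n-1, [e_1,e_n] = 0,
   [e_2,e_3] in <e_5, ..., e_n>. *)
Definition adapted c : Prop :=
  forall i0 : 'I_n, val i0 = 0%N ->
  (forall (i j : 'I_n), (1 <= i)%N -> val j = i.+1 -> c i0 i = bvec j)
  /\ (forall i : 'I_n, val i = n.-1 -> c i0 i = 0)
  /\ (forall i j : 'I_n, val i = 1%N -> val j = 2%N ->
        forall k : 'I_n, (k < 4)%N -> (c i j) 0 k = 0).

(* g_i = <e_i, ..., e_n> (paper's 1-based i): vectors whose coordinates on
   e_1, ..., e_(i-1) vanish. *)
Definition gsub (i : nat) (x : 'rV[K]_n) : Prop :=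
  forall k : 'I_n, (k.+1 < i)%N -> x 0 k = 0.

(* A linear functional l in g^* is represented by a column vector:
   l(v) = (v *m l) 0 0. *)
Definition app (l : 'cV[K]_n) (v : 'rV[K]_n) : K := (v *m l) 0 0.

(* g(l) = { y | l([x,y]) = 0 for all x }.  Its elements are exactly the row
   vectors y with y *m stab_mx c l = 0, since (y *m stab_mx c l) 0 i = l([e_i,y]);
   g(l) is therefore the row space of kermx (stab_mx c l). *)
Definition stab_mx c (l : 'cV[K]_n) : 'M[K]_n :=
  \matrix_(j < n, i < n) app l (br c (bvec i) (bvec j)).

Definition in_stab c (l : 'cV[K]_n) (y : 'rV[K]_n) : Prop :=
  forall x, app l (br c x y) = 0.

Definition dim_stab c (l : 'cV[K]_n) : nat := \rank (kermx (stab_mx c l)).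

Definition chi_eq c (m : nat) : Prop :=
  (exists l, dim_stab c l = m) /\ (forall l, (m <= dim_stab c l)%N).
End Defs.

(* Main.v *)
Require Import Defs.
From HB Require Import structures.
From mathcomp Require Import all_boot all_order all_algebra.
From mathcomp Require Import zify ring.
From Stdlib Require Import Classical.
Import GRing.Theory.
Set Implicit Arguments. Unset Strict Implicit.
Local Open Scope ring_scope.

Section Basic.
Variables (K : fieldType) (n : nat) (c : 'I_n -> 'I_n -> 'rV[K]_n).

Lemma bvecE (i k : 'I_n) : (bvec K i) 0 k = (k == i)%:R.
Proof. by rewrite /bvec mxE eqxx. Qed.

Lemma br_bvecl (i : 'I_n) y : br c (bvec K i) y = \sum_j y 0 j *: c i j.
Proof.
rewrite /br (bigD1 i) //=.
rewrite [X in _ + X]big1 ?addr0.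
  by apply: eq_bigr => j _; rewrite bvecE eqxx mul1r.
by move=> k /negbTE nki; apply: big1 => j _; rewrite bvecE nki mul0r scale0r.
Qed.

Lemma br_bvecr (j : 'I_n) x : br c x (bvec K j) = \sum_i x 0 i *: c i j.
Proof.
rewrite /br; apply: eq_bigr => i _.
rewrite (bigD1 j) //= [X in _ + X]big1 ?addr0.
  by rewrite bvecE eqxx mulr1.
by move=> k /negbTE nkj; rewrite bvecE nkj mulr0 scale0r.
Qed.

Lemma br_bvec (i j : 'I_n) : br c (bvec K i) (bvec K j) = c i j.
Proof.
rewrite br_bvecl (bigD1 j) //= [X in _ + X]big1 ?addr0.
  by rewrite bvecE eqxx scale1r.
by move=> k /negbTE nkj; rewrite bvecE nkj scale0r.
Qed.

Lemma brDl x x' y : br c (x + x') y = br c x y + br c x' y.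
Proof.
rewrite /br -big_split /=; apply: eq_bigr => i _.
rewrite -big_split /=; apply: eq_bigr => j _.
by rewrite mxE mulrDl scalerDl.
Qed.

Lemma brDr x y y' : br c x (y + y') = br c x y + br c x y'.
Proof.
rewrite /br -big_split /=; apply: eq_bigr => i _.
rewrite -big_split /=; apply: eq_bigr => j _.
by rewrite mxE mulrDr scalerDl.
Qed.

Lemma brZl a x y : br c (a *: x) y = a *: br c x y.
Proof.
rewrite /br scaler_sumr; apply: eq_bigr => i _.
rewrite scaler_sumr; apply: eq_bigr => j _.
by rewrite mxE scalerA mulrA.
Qed.

Lemma brZr a x y : br c x (a *: y) = a *: br c x y.
Proof.
rewrite /br scaler_sumr; apply: eq_bigr => i _.
rewrite scaler_sumr; apply: eq_bigr => j _.
by rewrite mxE scalerA mulrCA.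
Qed.

Lemma br0l y : br c 0 y = 0.
Proof. by rewrite /br big1 // => i _; rewrite big1 // => j _; rewrite mxE mul0r scale0r. Qed.

Lemma br0r x : br c x 0 = 0.
Proof. by rewrite /br big1 // => i _; rewrite big1 // => j _; rewrite mxE mulr0 scale0r. Qed.

Lemma brNl x y : br c (- x) y = - br c x y.
Proof. by rewrite -scaleN1r brZl scaleN1r. Qed.

Lemma brNr x y : br c x (- y) = - br c x y.
Proof. by rewrite -scaleN1r brZr scaleN1r. Qed.

Lemma br_sumr I (r : seq I) (P : pred I) F x :
  br c x (\sum_(i <- r | P i) F i) = \sum_(i <- r | P i) br c x (F i).
Proof.
elim/big_rec2: _ => [|i y1 y2 _ <-]; first exact: br0r.
by rewrite brDr.
Qed.

Lemma br_suml I (r : seq I) (P : pred I) F y :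
  br c (\sum_(i <- r | P i) F i) y = \sum_(i <- r | P i) br c (F i) y.
Proof.
elim/big_rec2: _ => [|i y1 y2 _ <-]; first exact: br0l.
by rewrite brDl.
Qed.

Lemma vec_expand (y : 'rV[K]_n) : y = \sum_j y 0 j *: bvec K j.
Proof. exact: row_sum_delta. Qed.

Lemma brEr x y : br c x y = \sum_j y 0 j *: br c x (bvec K j).
Proof.
by rewrite {1}(vec_expand y) br_sumr; apply: eq_bigr => j _; rewrite brZr.
Qed.

Lemma brEl x y : br c x y = \sum_i x 0 i *: br c (bvec K i) y.
Proof.
by rewrite {1}(vec_expand x) br_suml; apply: eq_bigr => j _; rewrite brZl.
Qed.

End Basic.

Section Lie.
Variables (K : fieldType) (n : nat) (c : 'I_n -> 'I_n -> 'rV[K]_n).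
Hypothesis Hlie : is_lie c.

Lemma br_alt x : br c x x = 0.
Proof. by case: Hlie => H _; apply: H. Qed.

Lemma br_anti x y : br c y x = - br c x y.
Proof.
have := br_alt (x + y); rewrite !brDl !brDr !br_alt add0r addr0.
by move/eqP; rewrite addrC addr_eq0 => /eqP.
Qed.

Lemma c_diag i : c i i = 0.
Proof. by rewrite -br_bvec br_alt. Qed.

Lemma jac2 x y z : br c (br c x y) z = br c x (br c y z) - br c y (br c x z).
Proof.
case: Hlie => _ /(_ x y z) J.
move: J; rewrite (br_anti x z) brNr => J.
by rewrite (br_anti z) -[LHS]add0r -J addrK.
Qed.

End Lie.

Section Gsub.
Variables (K : fieldType) (n : nat).

Definition Gs (r : nat) (v : 'rV[K]_n) := forall t : 'I_n, (t < r)%N -> v 0 t = 0.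

Lemma Gs0 r : Gs r 0.
Proof. by move=> t _; rewrite mxE. Qed.

Lemma GsD r u v : Gs r u -> Gs r v -> Gs r (u + v).
Proof. by move=> hu hv t ht; rewrite mxE hu // hv // addr0. Qed.

Lemma GsZ r a v : Gs r v -> Gs r (a *: v).
Proof. by move=> hv t ht; rewrite mxE hv // mulr0. Qed.

Lemma GsN r v : Gs r v -> Gs r (- v).
Proof. by move=> hv t ht; rewrite mxE hv // oppr0. Qed.

Lemma GsB r u v : Gs r u -> Gs r v -> Gs r (u - v).
Proof. by move=> hu hv; apply: GsD => //; apply: GsN. Qed.

Lemma Gs_sum I (s : seq I) (P : pred I) F r :
  (forall i, P i -> Gs r (F i)) -> Gs r (\sum_(i <- s | P i) F i).
Proof.
move=> h; elim/big_rec: _ => [|i y Pi hy]; first exact: Gs0.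
by apply: GsD => //; apply: h.
Qed.

Lemma Gs_mono r r' v : (r' <= r)%N -> Gs r v -> Gs r' v.
Proof. by move=> le h t ht; apply: h; apply: leq_trans le. Qed.

Lemma Gs_big r v : (n <= r)%N -> Gs r v -> v = 0.
Proof.
move=> le h; apply/rowP => t; rewrite mxE; apply: h.
exact: leq_trans (ltn_ord t) le.
Qed.

Lemma Gs_bvec r (j : 'I_n) : (r <= j)%N -> Gs r (bvec K j).
Proof.
move=> le t ht; rewrite bvecE; case: eqP => // tj.
by move: ht; rewrite tj ltnNge le.
Qed.

End Gsub.

Section Adapted.
Variables (K : fieldType) (n : nat) (c : 'I_n -> 'I_n -> 'rV[K]_n).
Hypothesis Hlie : is_lie c.
Hypothesis Had : adapted c.
Hypothesis Hn : (3 <= n)%N.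

Let n_gt0 : (0 < n)%N. Proof. by apply: leq_trans Hn. Qed.
Definition i0 : 'I_n := Ordinal n_gt0.

Lemma c0E (j t : 'I_n) : (c i0 j) 0 t = ((1 <= j)%N && (val t == j.+1))%:R.
Proof.
have [A1 [A2 _]] := @Had i0 erefl.
case: (posnP j) => [j0|jpos].
  have -> : j = i0 by apply: val_inj.
  by rewrite c_diag // mxE.
case: (ltnP j.+1 n) => [jl|jl].
  by rewrite (A1 j (Ordinal jl) jpos erefl) bvecE.
have jn : (j : nat) = n.-1.
  by have := ltn_ord j; lia.
rewrite (A2 j jn) mxE /=; case: eqP => // tj.
by have := ltn_ord t; lia.
Qed.

Lemma br0_coord v t : (br c (bvec K i0) v) 0 t =
  \sum_j v 0 j * ((1 <= j)%N && (val t == j.+1))%:R.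
Proof.
rewrite br_bvecl summxE; apply: eq_bigr => j _.
by rewrite mxE c0E.
Qed.

Lemma br0_lt2 v (t : 'I_n) : (t < 2)%N -> (br c (bvec K i0) v) 0 t = 0.
Proof.
move=> t2; rewrite br0_coord big1 // => j _.
case: (posnP j) => [->|jp]; first by rewrite mulr0.
case: eqP => [tj|]; last by rewrite mulr0.
by move: t2; rewrite tj ltnS ltnNge jp.
Qed.

Lemma br0_shift v (t k : 'I_n) : val t = k.+1 -> (1 <= k)%N ->
  (br c (bvec K i0) v) 0 t = v 0 k.
Proof.
move=> tk kp; rewrite br0_coord (bigD1 k) //= [X in _ + X]big1 ?addr0.
  by rewrite kp tk eqxx mulr1.
move=> j jk; case: eqP; last by rewrite andbF mulr0.
by rewrite tk => -[/val_inj ekj]; move: jk; rewrite ekj eqxx.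
Qed.

Lemma Gs_shift r v : Gs r v -> Gs r.+1 (br c (bvec K i0) v).
Proof.
move=> hv t ht; case: (ltnP t 2) => t2; first exact: br0_lt2.
have tl : (t.-1 < n)%N by apply: leq_ltn_trans (leq_pred t) (ltn_ord t).
have tk : val t = (Ordinal tl).+1 by rewrite /= prednK // ltnW.
rewrite (br0_shift v tk); last by rewrite /= -ltnS prednK // ltnW.
apply: hv => /=; rewrite -ltnS prednK //; exact: ltnW.
Qed.

End Adapted.

Section GvSec.
Variables (K : fieldType) (n : nat).

Definition Gv (k : nat) : {vspace 'rV[K]_n} :=
  <<[seq bvec K j | j <- [seq j : 'I_n <- enum 'I_n | (k <= j)%N]]>>%VS.
Definition Lv (k : nat) : {vspace 'rV[K]_n} :=
  <<[seq bvec K j | j <- [seq j : 'I_n <- enum 'I_n | (j < k)%N]]>>%VS.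

Lemma memGv k v : Gs k v -> v \in Gv k.
Proof.
move=> hv; rewrite (vec_expand v); apply: memv_suml => j _.
case: (ltnP j k) => jk; first by rewrite hv // scale0r mem0v.
apply: memvZ; apply: memv_span; apply: map_f.
by rewrite mem_filter jk mem_enum.
Qed.

Lemma GvGs k v : v \in Gv k -> Gs k v.
Proof.
rewrite /Gv; set s := map _ _.
move=> /(@coord_span _ _ _ (in_tuple s)) ->.
apply: Gs_sum => i _; apply: GsZ.
have : (in_tuple s)`_i \in s by apply: mem_nth; exact: ltn_ord.
by case/mapP => j; rewrite mem_filter => /andP[kj _] ->; apply: Gs_bvec.
Qed.

Lemma dimLv k : (\dim (Lv k) <= k)%N.
Proof.
apply: leq_trans (dim_span _) _; rewrite size_map.
set s := [seq j : 'I_n <- enum 'I_n | _].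
rewrite -(size_map val s) -(size_iota 0 k).
apply: uniq_leq_size.
  by rewrite (map_inj_uniq val_inj) filter_uniq // enum_uniq.
move=> x /mapP [j]; rewrite mem_filter => /andP[jk _] ->.
by rewrite mem_iota add0n.
Qed.

Lemma fullLG k : (fullv <= Lv k + Gv k)%VS.
Proof.
apply/subvP => v _; rewrite (vec_expand v); apply: memv_suml => j _.
apply: memvZ; case: (ltnP j k) => jk.
  apply: (subvP (addvSl _ _)); apply: memv_span; apply: map_f.
  by rewrite mem_filter jk mem_enum.
apply: (subvP (addvSr _ _)); apply: memv_span; apply: map_f.
by rewrite mem_filter jk mem_enum.
Qed.

Lemma dimGv k : (n - k <= \dim (Gv k))%N.
Proof.
rewrite leq_subLR.
have h1 : (\dim (fullv : {vspace 'rV[K]_n}) <= \dim (Lv k + Gv k))%N.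
  exact: dimvS (fullLG k).
have h2 := dimv_add_leqif (Lv k) (Gv k).
have h3 := dimLv k.
move: h1; rewrite dimvf /dim /= mul1n => h1.
apply: leq_trans h1 _; apply: leq_trans h2 _; by rewrite leq_add2r.
Qed.

End GvSec.

Section Lcs.
Variables (K : fieldType) (n : nat) (c : 'I_n -> 'I_n -> 'rV[K]_n).
Hypothesis Hfil : filiform c.
Hypothesis Had : adapted c.
Hypothesis Hn : (3 <= n)%N.

Let Hlie : is_lie c. Proof. by case: Hfil. Qed.

Lemma brg_mem (V : {vspace 'rV[K]_n}) x w : w \in V -> br c x w \in brg c V.
Proof.
move=> /coord_vbasis ->; rewrite brEl; apply: memv_suml => i _.
apply: memvZ; rewrite br_sumr; apply: memv_suml => j _.
rewrite brZr; apply: memvZ; apply: memv_span.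
apply: allpairs_f; first by rewrite mem_enum.
by apply: mem_nth; rewrite size_tuple.
Qed.

Lemma lcsS k : (1 <= k)%N -> lcs c k.+1 = brg c (lcs c k).
Proof. by case: k => [|[|k]]. Qed.

Lemma bvec_lcs k : (2 <= k)%N -> forall j : 'I_n, (k <= j)%N -> bvec K j \in lcs c k.
Proof.
elim: k => [|k IH] // k2 j kj.
have jl : (j.-1 < n)%N by apply: leq_ltn_trans (leq_pred j) (ltn_ord j).
have jp : (1 <= Ordinal jl)%N by rewrite /=; lia.
have [A1 _] := @Had (i0 Hn) erefl.
rewrite -(A1 (Ordinal jl) j jp) /=; last by lia.
rewrite -br_bvec; change (br c (bvec K (i0 Hn)) (bvec K (Ordinal jl)) \in lcs c k.+1).
rewrite lcsS; last by lia.
apply: brg_mem.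
case: (ltnP k 2) => k2'.
  have -> : k = 1%N by lia.
  exact: memvf.
apply: IH => //=; lia.
Qed.

Lemma lcs_Gv k : (2 <= k <= n)%N -> lcs c k = Gv K n k.
Proof.
move=> /andP[k2 kn].
have sub : (Gv K n k <= lcs c k)%VS.
  by apply/span_subvP => v /mapP [j]; rewrite mem_filter => /andP[kj _] ->; apply: bvec_lcs.
apply/eqP; rewrite eq_sym -(dimv_leqif_eq sub).2 eqn_leq (dimv_leqif_eq sub).1 /=.
have [_ [_ D]] := Hfil.
rewrite D ?k2 //; exact: dimGv.
Qed.

Lemma Fprop x r v : (1 <= r)%N -> Gs r v -> Gs r.+1 (br c x v).
Proof.
move=> r1 hv; case: (ltnP r n) => rn; last first.
  by rewrite (Gs_big rn hv) br0r; apply: Gs0.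
apply: GvGs; rewrite -lcs_Gv; last by apply/andP; split; lia.
rewrite lcsS //; apply: brg_mem.
case: (ltnP r 2) => r2.
  have -> : r = 1%N by lia.
  exact: memvf.
rewrite lcs_Gv; last by apply/andP; split; lia.
exact: memGv.
Qed.

End Lcs.

Section Vergne.
Variables (K : fieldType) (n : nat) (c : 'I_n -> 'I_n -> 'rV[K]_n).
Hypothesis Hfil : filiform c.
Hypothesis Had : adapted c.
Hypothesis Hn : (3 <= n)%N.

Let Hlie : is_lie c. Proof. by case: Hfil. Qed.
Local Notation e0 := (i0 Hn).

Lemma c0_succ (a b : 'I_n) : (1 <= a)%N -> val b = a.+1 -> c e0 a = bvec K b.
Proof. by have [A1 _] := @Had e0 erefl; apply: A1. Qed.

Lemma Blem_aux m : forall i : 'I_n, (i : nat) = m.+1 ->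
  forall r v, (1 <= r)%N -> Gs r v -> Gs (i + r) (br c (bvec K i) v).
Proof.
elim: m => [|m IH] i im r v r1 hv.
  by rewrite im add1n; apply: Fprop.
have il : (m.+1 < n)%N by have := ltn_ord i; lia.
have i'm : val (Ordinal il) = m.+1 by [].
rewrite -(c0_succ (a := Ordinal il)) //= -br_bvec jac2 //.
apply: GsB.
  have -> : (i + r = (Ordinal il + r).+1)%N by rewrite im /= addSn.
  apply: Gs_shift => //; exact: IH.
have -> : (i + r = Ordinal il + r.+1)%N by rewrite im /= addnS addSn.
by apply: IH => //; apply: Gs_shift.
Qed.

Lemma Blem (i : 'I_n) r v : (1 <= i)%N -> (1 <= r)%N -> Gs r v ->
  Gs (i + r) (br c (bvec K i) v).
Proof.
move=> i1; apply: (@Blem_aux i.-1); by rewrite prednK.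
Qed.

Lemma Bbound (i j : 'I_n) : (1 <= i)%N -> (1 <= j)%N -> Gs (i + j) (c i j).
Proof.
by move=> i1 j1; rewrite -br_bvec; apply: Blem => //; apply: Gs_bvec.
Qed.

Lemma lead (i k t : 'I_n) v : (1 <= i)%N -> (1 <= k)%N -> Gs k v ->
  val t = (i + k)%N -> (br c (bvec K i) v) 0 t = v 0 k * (c i k) 0 t.
Proof.
move=> i1 k1 hv tik; rewrite br_bvecl summxE (bigD1 k) //= mxE.
rewrite [X in _ + X]big1 ?addr0 // => j jk; rewrite mxE.
case: (ltnP j k) => jk'; first by rewrite hv // mul0r.
have jk2 : (k < j)%N by rewrite ltn_neqAle jk' andbT eq_sym.
rewrite (Bbound i1 (leq_trans k1 (ltnW jk2))) ?mulr0 // tik ltn_add2l //.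
Qed.

End Vergne.

Lemma oddE k : odd k -> exists q, k = (q + q).+1.
Proof.
move=> ok; exists k./2; have := odd_double_half k.
by rewrite ok -addnn add1n => ->.
Qed.

Lemma evenE k : ~~ odd k -> exists q, k = (q + q)%N.
Proof.
move=> ok; exists k./2; have := odd_double_half k.
by rewrite (negbTE ok) -addnn add0n => ->.
Qed.

Lemma chain0 (K : fieldType) (f : nat -> K) lo hi p :
  (forall a, (lo <= a)%N -> (a < hi)%N -> f a + f a.+1 = 0) ->
  (lo <= p <= hi)%N -> f p = 0 -> forall a, (lo <= a <= hi)%N -> f a = 0.
Proof.
move=> R /andP[lp ph] fp a /andP[la ah].
case: (leqP a p) => ap.
  have H : forall k, (k <= p - lo)%N -> f (p - k)%N = 0.
    elim=> [|k IH] hk; first by rewrite subn0.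
    have := R (p - k.+1)%N; rewrite (_ : (p - k.+1).+1 = p - k)%N; last by lia.
    by rewrite IH; [rewrite addr0; apply; lia | lia].
  by rewrite (_ : a = p - (p - a))%N; [apply: H; lia | lia].
have H : forall k, (p + k <= hi)%N -> f (p + k)%N = 0.
  elim=> [|k IH] hk; first by rewrite addn0.
  have := R (p + k)%N; rewrite IH; last by lia.
  by rewrite add0r addnS; apply; lia.
by rewrite (_ : a = p + (a - p))%N; [apply: H; lia | lia].
Qed.

Section Vergne2.
Variables (K : fieldType) (n : nat) (c : 'I_n -> 'I_n -> 'rV[K]_n).
Hypothesis Hch : [pchar K] =i pred0.
Hypothesis Hodd : odd n.
Hypothesis Hfil : filiform c.
Hypothesis Had : adapted c.
Hypothesis Hn : (3 <= n)%N.

Let Hlie : is_lie c. Proof. by case: Hfil. Qed.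
Local Notation e0 := (i0 Hn).

Definition oo (a : nat) : 'I_n := insubd e0 a.

Lemma ooE a : (a < n)%N -> (oo a : nat) = a.
Proof. by rewrite val_insubd => ->. Qed.

Lemma oo_ord (i : 'I_n) : oo i = i.
Proof. by apply: val_inj => /=; rewrite ooE. Qed.

Lemma c_anti i j : c j i = - c i j.
Proof. by rewrite -!br_bvec br_anti. Qed.

Lemma shift_id (a b : 'I_n) : (1 <= a)%N -> (1 <= b)%N -> (a.+1 < n)%N -> (b.+1 < n)%N ->
  br c (bvec K e0) (c a b) = c (oo a.+1) b + c a (oo b.+1).
Proof.
move=> a1 b1 an bn.
have E1 : c e0 a = bvec K (oo a.+1) by apply: c0_succ => //=; rewrite ooE.
have E2 : c e0 b = bvec K (oo b.+1) by apply: c0_succ => //=; rewrite ooE.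
have := jac2 Hlie (bvec K e0) (bvec K a) (bvec K b).
rewrite !br_bvec E1 E2 !br_bvec => ->.
by rewrite subrK.
Qed.

Definition Dm m := forall i j : 'I_n, (1 <= i)%N -> (1 <= j)%N -> (i + j)%N = m ->
  Gs m.+1 (c i j).

Lemma Dm_big m : (n <= m)%N -> Dm m.
Proof.
move=> nm i j i1 j1 ijm.
have := Bbound Hfil Had Hn i1 j1; rewrite ijm => h.
by rewrite (Gs_big nm h); apply: Gs0.
Qed.

Lemma Dm_small m : (m <= 3)%N -> Dm m.
Proof.
move=> m3 i j i1 j1 ijm.
have [_ [_ A3]] := @Had e0 erefl.
case: (ltnP i 2) => i2; case: (ltnP j 2) => j2.
- have -> : i = j by apply: val_inj; rewrite /=; lia.
  by rewrite c_diag //; apply: Gs0.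
- have jv : (j : nat) = 2 by lia.
  have iv : (i : nat) = 1 by lia.
  by move=> t tm; apply: A3 => //; lia.
- have jv : (j : nat) = 1 by lia.
  have iv : (i : nat) = 2 by lia.
  rewrite c_anti; apply: GsN.
  by move=> t tm; apply: A3 => //; lia.
- lia.
Qed.

Section Step.
Variable m : nat.
Hypothesis m4 : (4 <= m)%N.
Hypothesis mn : (m < n)%N.
Hypothesis D3 : Dm 3.
Hypothesis Dprev : Dm m.-1.

Let T : 'I_n := Ordinal mn.
Definition xx a := (c (oo a) (oo (m - a))) 0 T.

Lemma xrel a : (1 <= a)%N -> (a < m - 1)%N -> xx a + xx a.+1 = 0.
Proof.
move=> a1 am.
have hA : (oo a : nat) = a by rewrite ooE //; lia.
have hB : (oo (m - 1 - a) : nat) = (m - 1 - a)%N by rewrite ooE //; lia.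
have G : Gs m (c (oo a) (oo (m - 1 - a))).
  have h := @Dprev (oo a) (oo (m - 1 - a)).
  rewrite (_ : (m.-1).+1 = m) in h; last by lia.
  by apply: h; rewrite ?hA ?hB; lia.
have := Gs_shift Hlie Had Hn G (t := T) (ltnSn m).
rewrite shift_id ?hA ?hB; try lia.
rewrite mxE addrC.
have -> : oo (m - 1 - a).+1 = oo (m - a) by apply: val_inj => /=; rewrite !ooE; lia.
have -> : oo (m - 1 - a) = oo (m - a.+1) by congr oo; lia.
by [].
Qed.

Lemma xanti a : (1 <= a)%N -> (a < m)%N -> xx (m - a) = - xx a.
Proof.
move=> a1 am; rewrite /xx (_ : m - (m - a) = a)%N; last by lia.
by rewrite c_anti mxE.
Qed.

Lemma xdiag a : (m = a + a)%N -> xx a = 0.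
Proof. by move=> ma; rewrite /xx ma addnK c_diag // mxE. Qed.

Lemma Dm_of_x : (forall a, (1 <= a <= m - 1)%N -> xx a = 0) -> Dm m.
Proof.
move=> hx i j i1 j1 ijm t tm.
have G := Bbound Hfil Had Hn i1 j1.
case: (ltnP t m) => tm'; first by apply: G; lia.
have tT : t = T by apply: val_inj => /=; lia.
have := hx i; rewrite /xx oo_ord (_ : oo (m - i) = j); last first.
  by apply: val_inj => /=; rewrite ooE; lia.
by rewrite tT; apply; lia.
Qed.

Lemma Dm_even : ~~ odd m -> Dm m.
Proof.
move=> /evenE [p mp]; apply: Dm_of_x.
apply: (@chain0 _ xx 1 (m - 1) p).
- by move=> a a1 am; apply: xrel.
- lia.
- exact: xdiag.
Qed.


Lemma Dm_odd : odd m -> Dm m.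
Proof.
move=> om.
have mn1 : (m.+1 < n)%N by have [q nq] := oddE Hodd; have [r mr] := oddE om; lia.
pose T1 : 'I_n := Ordinal mn1.
pose y a := (c (oo a) (oo (m.+1 - a))) 0 T1.
pose cc := - xx 1.
have xs : forall a, (1 <= a <= m - 1)%N -> xx a = (-1) ^+ a * cc.
  elim=> [|a IH] /andP[a1 am] //.
  case: a IH a1 am => [|a] IH _ am; first by rewrite /cc expr1 mulN1r opprK.
  have := xrel (a := a.+1) isT; rewrite (_ : (a.+1 < m - 1)%N = true); last by lia.
  move=> /(_ isT) /eqP; rewrite addrC addr_eq0 => /eqP ->.
  rewrite IH; last by lia.
  by rewrite [(-1) ^+ a.+2]exprS mulN1r mulNr.
have yrel : forall a, (1 <= a)%N -> (a <= m - 1)%N -> y a + y a.+1 = xx a.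
  move=> a a1 am.
  have hA : (oo a : nat) = a by rewrite ooE //; lia.
  have hB : (oo (m - a) : nat) = (m - a)%N by rewrite ooE //; lia.
  have := br0_shift Hlie Had Hn (c (oo a) (oo (m - a))) (t := T1) (k := T) erefl.
  rewrite (_ : (1 <= T)%N = true); last by rewrite /=; lia.
  move=> /(_ isT); rewrite shift_id ?hA ?hB; try lia.
  rewrite mxE /xx => <-; rewrite addrC /y.
  have -> : oo (m - a).+1 = oo (m.+1 - a) by congr oo; lia.
  by [].
have [p mp] : exists p, m.+1 = (p + p)%N by apply: evenE; rewrite /= om.
have ymid : y p = 0.
  by rewrite /y (_ : m.+1 - p = p)%N ?c_diag ?mxE //; lia.
have yform : forall k, (k <= p - 1)%N -> y (p - k)%N = (-1) ^+ (p - k) * (k%:R * cc).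
  elim=> [|k IH] hk; first by rewrite subn0 ymid mul0r mulr0.
  have yr := yrel (p - k.+1)%N.
  rewrite (_ : (p - k.+1).+1 = p - k)%N in yr; last by lia.
  rewrite IH in yr; last by lia.
  rewrite xs in yr; last by lia.
  rewrite (_ : (p - k)%N = (p - k.+1).+1) in yr *; last by lia.
  have -> : y (p - k.+1)%N = (-1) ^+ (p - k.+1) * cc -
     (-1) ^+ (p - k.+1).+1 * (k%:R * cc).
    by rewrite -yr; [rewrite addrK | lia | lia].
  rewrite exprS -add1n natrD; ring.
have y1 : y 1%N = - ((p - 1)%:R * cc).
  have := yform (p - 1)%N (leqnn _); rewrite (_ : (p - (p - 1))%N = 1%N); last by lia.
  by rewrite expr1 mulN1r.
have x2 : xx 2 = cc by rewrite xs; [rewrite expr2 mulrNN !mul1r | lia].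
have hE1 : (oo 1 : nat) = 1%N by rewrite ooE //; lia.
have hE2 : (oo 2 : nat) = 2%N by rewrite ooE //; lia.
have hEd : (oo (m - 2) : nat) = (m - 2)%N by rewrite ooE //; lia.
have J := jac2 Hlie (bvec K (oo 1)) (bvec K (oo 2)) (bvec K (oo (m - 2))).
rewrite !br_bvec in J.
rewrite (br_anti Hlie (bvec K (oo (m - 2)))) in J.
have := congr1 (fun v : 'rV[K]_n => v 0 T1) J => /=.
rewrite !mxE.
have Z1 : (br c (bvec K (oo (m - 2))) (c (oo 1) (oo 2))) 0 T1 = 0.
  have G4 : Gs 4 (c (oo 1) (oo 2)) by apply: D3; rewrite ?hE1 ?hE2.
  have := Blem Hfil Had Hn (i := oo (m - 2)) _ _ G4.
  rewrite hEd; move=> /(_ _ isT); apply; rewrite /=; lia.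
have Z2 : (br c (bvec K (oo 2)) (c (oo 1) (oo (m - 2)))) 0 T1 = 0.
  have Gm : Gs m (c (oo 1) (oo (m - 2))).
    have h := @Dprev (oo 1) (oo (m - 2)).
    rewrite (_ : (m.-1).+1 = m) in h; last by lia.
    by apply: h; rewrite ?hE1 ?hEd; lia.
  have := Blem Hfil Had Hn (i := oo 2) _ _ Gm.
  rewrite hE2; move=> /(_ isT); rewrite (_ : (1 <= m)%N = true); last by lia.
  move=> /(_ isT); apply; rewrite /=; lia.
have L : (br c (bvec K (oo 1)) (c (oo 2) (oo (m - 2)))) 0 T1 = xx 2 * y 1%N.
  have Gm : Gs T (c (oo 2) (oo (m - 2))).
    have := Bbound Hfil Had Hn (i := oo 2) (j := oo (m - 2)).
    rewrite hE2 hEd (_ : (2 + (m - 2))%N = T); last by rewrite /=; lia.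
    by apply; lia.
  rewrite (lead Hfil Had Hn (i := oo 1) (k := T) (t := T1)) //; first last.
  - by rewrite hE1 /=.
  - by rewrite /=; lia.
  - by rewrite hE1.
  rewrite /y /xx; congr (_ * _).
  by rewrite (_ : oo (m.+1 - 1) = T) //; apply: val_inj => /=; rewrite ooE; lia.
rewrite Z1 Z2 L oppr0 addr0 x2 y1 => /esym /eqP.
rewrite mulrN oppr_eq0 mulf_eq0 mulf_eq0.
have -> : ((p - 1)%:R == 0 :> K) = false.
  by rewrite (proj1 (pcharf0P K) Hch); apply/negbTE; lia.
rewrite /= orbb => /eqP cc0.
apply: Dm_of_x => a ha.
by rewrite xs // cc0 mulr0.
Qed.

End Step.


Lemma D_all m : Dm m.
Proof.
elim: m => [|m IH]; first by apply: Dm_small.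
case: (leqP m.+1 3) => [m3|m4]; first exact: Dm_small.
case: (leqP n m.+1) => [nm|mn]; first exact: Dm_big.
case: (boolP (odd m.+1)) => om.
  by apply: (@Dm_odd m.+1) => //; apply: Dm_small.
by apply: (@Dm_even m.+1) => //; apply: Dm_small.
Qed.

Lemma c0G (j : 'I_n) : Gs j.+1 (c e0 j).
Proof.
have [A1 [A2 _]] := @Had e0 erefl.
case: (posnP j) => [j0|j1].
  have -> : j = e0 by apply: val_inj.
  by rewrite c_diag //; apply: Gs0.
case: (ltnP j.+1 n) => jl.
  by rewrite (A1 j (Ordinal jl) j1 erefl); apply: Gs_bvec.
have jn : (j : nat) = n.-1 by have := ltn_ord j; lia.
by rewrite (A2 j jn); apply: Gs0.
Qed.

Lemma VV (i j : 'I_n) : Gs (i + j).+1 (c i j).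
Proof.
case: (posnP i) => [i0'|i1].
  have -> : i = e0 by apply: val_inj.
  exact: c0G.
case: (posnP j) => [j0|j1].
  have -> : j = e0 by apply: val_inj.
  by rewrite c_anti addn0 /=; apply: GsN; exact: c0G.
exact: D_all.
Qed.

End Vergne2.

Section MatLemmas.
Variables (K : fieldType) (n : nat).

Lemma pidmulE r (A : 'M[K]_n) j i : (pid_mx r *m A) j i = (j < r)%:R * A j i.
Proof.
rewrite mxE (bigD1 j) //= [X in _ + X]big1 ?addr0; first by rewrite mxE eqxx.
by move=> k kj; rewrite mxE; case: eqP => [/val_inj kj'|]; [move: kj; rewrite kj' eqxx | rewrite mul0r].
Qed.

Lemma mulpidE r (A : 'M[K]_n) j i : (A *m pid_mx r) j i = A j i * (i < r)%:R.
Proof.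
rewrite mxE (bigD1 i) //= [X in _ + X]big1 ?addr0; first by rewrite mxE eqxx.
by move=> k ki; rewrite mxE; case: eqP => [/val_inj ki'|]; [move: ki; rewrite ki' eqxx | rewrite mulr0].
Qed.

Lemma rank_split (A : 'M[K]_n) a b :
  (a <= n)%N -> (b <= n)%N ->
  (forall (j i : 'I_n), (b <= j)%N -> (a <= i)%N -> A j i = 0) ->
  (\rank A <= a + b)%N.
Proof.
move=> an bn h.
have -> : A = pid_mx b *m A + (A - pid_mx b *m A) by rewrite addrC subrK.
apply: (leq_trans (mxrank_add _ _)); rewrite addnC; apply: leq_add; last first.
  by apply: (leq_trans (mxrankM_maxl _ _)); rewrite rank_pid_mx.
have -> : A - pid_mx b *m A = (A - pid_mx b *m A) *m pid_mx a.
  apply/matrixP => j i; rewrite mulpidE.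
  have -> : (A - pid_mx b *m A) j i = A j i - (j < b)%:R * A j i by rewrite -pidmulE !mxE.
  case: (ltnP i a) => ia; first by rewrite mulr1.
  case: (ltnP j b) => jb; first by rewrite mul1r subrr mul0r.
  by rewrite h // mulr0 subrr mul0r.
by apply: (leq_trans (mxrankM_maxr _ _)); rewrite rank_pid_mx.
Qed.

Lemma mul_deltaE (M : 'M[K]_n) (a b r t : 'I_n) :
  (M *m delta_mx a b) r t = M r a * (t == b)%:R.
Proof.
rewrite mxE (bigD1 a) //= [X in _ + X]big1 ?addr0; first by rewrite mxE eqxx.
by move=> k ka; rewrite mxE (negbTE ka) mulr0.
Qed.

End MatLemmas.

Section Main.
Variables (K : fieldType) (n : nat) (c : 'I_n -> 'I_n -> 'rV[K]_n).
Hypothesis Hch : [pchar K] =i pred0.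
Hypothesis Hodd : odd n.
Hypothesis Hn : (3 <= n)%N.
Hypothesis Hfil : filiform c.
Hypothesis Had : adapted c.

Let Hlie : is_lie c. Proof. by case: Hfil. Qed.
Let tl : (n.-1 < n)%N. Proof. by have := Hn; lia. Qed.
Let tn : 'I_n := Ordinal tl.

Lemma czero (i j : 'I_n) : (n <= (i + j).+1)%N -> c i j = 0.
Proof. by move=> h; apply: (Gs_big h); apply: (VV Hch Hodd Hfil Had Hn). Qed.

Lemma stabE l (j i : 'I_n) : stab_mx c l j i = app l (c i j).
Proof. by rewrite mxE br_bvec. Qed.

Lemma app0 (l : 'cV[K]_n) : app l 0 = 0.
Proof. by rewrite /app mul0mx mxE. Qed.

Lemma dim_ge1 l : (1 <= dim_stab c l)%N.
Proof.
have : (bvec K tn <= kermx (stab_mx c l))%MS.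
  apply/sub_kermxP; rewrite /bvec -rowE; apply/rowP => i.
  rewrite !mxE br_bvec czero ?app0 //= -addSn; lia.
by rewrite /dim_stab; move/mxrankS; rewrite mxrank_delta.
Qed.

Lemma conv (A B : 'I_n) : (A + B)%N = (n - 2)%N -> (c A B) 0 tn = 0 ->
  forall x y, Gs A x -> Gs B y -> br c x y = 0.
Proof.
move=> AB b0 x y hx hy.
rewrite /br big1 // => p _; rewrite big1 // => q _.
case: (ltnP p A) => pa; first by rewrite hx // mul0r scale0r.
case: (ltnP q B) => qb; first by rewrite hy // mulr0 scale0r.
case: (leqP n (p + q).+1) => pq; first by rewrite czero // scaler0.
have pA : p = A by apply: val_inj => /=; lia.
have qB : q = B by apply: val_inj => /=; lia.
rewrite pA qB (_ : c A B = 0) ?scaler0 //.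
apply/rowP => t; rewrite mxE.
case: (ltnP t n.-1) => tl'.
  by apply: (VV Hch Hodd Hfil Had Hn); lia.
have -> : t = tn by apply: val_inj => /=; have := ltn_ord t; lia.
exact: b0.
Qed.

Lemma gsub_Gs i (x : 'rV[K]_n) : gsub i x -> Gs i.-1 x.
Proof. by move=> h t ht; apply: h; lia. Qed.

Lemma gsub_bvec i (j : 'I_n) : (i.-1 <= j)%N -> gsub i (bvec K j).
Proof.
move=> h k hk; rewrite bvecE; case: eqP => // kj.
by move: hk; rewrite kj; lia.
Qed.


Lemma main_fwd : chi_eq c 1 -> forall i : nat, (1 <= i <= n - 1)%N ->
  exists x y : 'rV[K]_n, gsub i x /\ gsub (n - i) y /\ br c x y != 0.
Proof.
move=> [[l hl] _] i /andP[i1 iln]; apply: NNPP => H.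
have Z : forall x y, gsub i x -> gsub (n - i) y -> br c x y = 0.
  move=> x y hx hy; apply/eqP; apply/negP => /negP nz.
  by apply: H; exists x, y.
have : (\rank (stab_mx c l) <= i.-1 + (n - i).-1)%N.
  apply: rank_split; try lia.
  move=> j i' hj hi'; rewrite stabE -br_bvec Z ?app0 //; apply: gsub_bvec; lia.
move: hl; rewrite /dim_stab mxrank_ker; lia.
Qed.

Lemma main_bwd : (forall i : nat, (1 <= i <= n - 1)%N ->
  exists x y : 'rV[K]_n, gsub i x /\ gsub (n - i) y /\ br c x y != 0) -> chi_eq c 1.
Proof.
move=> H; split; last exact: dim_ge1.
exists (delta_mx tn 0); apply/eqP; rewrite eqn_leq dim_ge1 andbT.
set A := stab_mx c (delta_mx tn 0).
have beta : forall i j, A j i = (c i j) 0 tn.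
  by move=> i j; rewrite /A stabE /app -colE mxE.
have bnz : forall (i k : 'I_n), (i + k)%N = (n - 2)%N -> (c i k) 0 tn != 0.
  move=> i k ik; apply/negP => /eqP b0.
  have [x [y [hx [hy nz]]]] := H (n - 1 - k)%N (ltac:(apply/andP; split; lia)).
  move: nz; rewrite (conv ik b0) ?eqxx //.
    by move: (gsub_Gs hx); apply: Gs_mono; lia.
  by move: (gsub_Gs hy); apply: Gs_mono; lia.
have key : forall y : 'rV[K]_n, y *m A = 0 -> forall m (k : 'I_n), (k : nat) = m -> (m < n.-1)%N -> y 0 k = 0.
  move=> y hy; elim/ltn_ind => m IH k km mn.
  have il : (n - 2 - m < n)%N by lia.
  pose i : 'I_n := Ordinal il.
  have := congr1 (fun v : 'rV[K]_n => v 0 i) hy => /=.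
  rewrite !mxE (bigD1 k) //= [X in _ + X]big1 ?addr0.
    rewrite beta => /eqP; rewrite mulf_eq0 (negbTE (bnz i k _)) ?orbF; last by rewrite /=; lia.
    by move/eqP.
  move=> j jk; case: (ltnP j k) => jk'.
    by rewrite (IH j) ?mul0r //; lia.
  rewrite beta czero ?mxE ?mulr0 //= -addSn.
  have : (k < j)%N by rewrite ltn_neqAle jk' andbT eq_sym.
  lia.
rewrite /dim_stab -/A.
have -> : kermx A = kermx A *m delta_mx tn tn.
  apply/matrixP => r t; rewrite mul_deltaE.
  case: (eqVneq t tn) => [->|ttn]; first by rewrite mulr1.
  rewrite mulr0.
  have hr : row r (kermx A) *m A = 0 by rewrite -row_mul mulmx_ker row0.
  have := key _ hr t t erefl.
  rewrite mxE => ->; first by [].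
  have := ltn_ord t; move: ttn; rewrite -val_eqE /=; lia.
by apply: (leq_trans (mxrankM_maxr _ _)); rewrite mxrank_delta.
Qed.

End Main.

Unset Implicit Arguments.

Theorem theorem6p3 (K : fieldType) (n : nat)
    (c : 'I_n -> 'I_n -> 'rV[K]_n) :
  [pchar K] =i pred0 ->
  odd n -> (3 <= n)%N ->
  filiform c -> adapted c ->
  chi_eq c 1 <->
  (forall i : nat, (1 <= i <= n - 1)%N ->
     exists x y : 'rV[K]_n, gsub i x /\ gsub (n - i) y /\ br c x y != 0).
Proof.
move=> Hch Hodd Hn Hfil Had; split.
  by apply: main_fwd.
by apply: main_bwd.
Qed.
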